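(* Let $\mathcal{A}$ be a finite set of integers greater than $1$. Then there exist permutations $X\neq X'$ such that $C_aX=C_aX'$ for all $a\in\mathcal{A}$.
   Context: A finite dynamical system (FDS) is a function on a finite set, considered up to isomorphism of functional graphs; the product $AB$ acts on $S_A\times S_B$ by $(a,b)\mapsto(A(a),B(b))$. A permutation is a bijective FDS. $C_n$ denotes the FDS whose functional graph is a directed cycle of length $n$. *)

(* Defs.v *)
From mathcomp Require Import all_boot.
Unset Printing Implicit Defensive.

Record FDS := mkFDS { fds_carrier : finType; fds_map : fds_carrier -> fds_carrier }.

Definition fds_iso (X Y : FDS) : Prop :=
  exists h : fds_carrier X -> fds_carrier Y,
    bijective h /\ forall x, h (fds_map X x) = fds_map Y (h x).

Definition fds_prod (A B : FDS) : FDS :=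
  @mkFDS (fds_carrier A * fds_carrier B)%type
         (fun p => (fds_map A p.1, fds_map B p.2)).

Definition is_perm_fds (X : FDS) : Prop := bijective (fds_map X).

Definition cycleFDS (n : nat) : FDS := @mkFDS 'I_n (@ordS n).

(* Main.v *)
Require Import Defs.
From mathcomp Require Import all_boot.
From mathcomp Require Import all_algebra.
From mathcomp Require Import ring.

Lemma mkiso (X Y : FDS) (h : fds_carrier X -> fds_carrier Y)
  (g : fds_carrier Y -> fds_carrier X) :
  cancel h g -> cancel g h -> (forall x, h (fds_map X x) = fds_map Y (h x)) ->
  fds_iso X Y.
Proof. move=> hg gh hc; exists h; split=> //; by exists g. Qed.

Lemma iso_refl X : fds_iso X X.
Proof. by apply: (@mkiso X X id id). Qed.

Lemma iso_sym X Y : fds_iso X Y -> fds_iso Y X.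
Proof.
case=> h [[g hg gh] hc]; apply: (@mkiso Y X g h) => // y.
apply: (can_inj hg); by rewrite hc !gh.
Qed.

Lemma iso_trans X Y Z : fds_iso X Y -> fds_iso Y Z -> fds_iso X Z.
Proof.
case=> h [[g hg gh] hc]; case=> h' [[g' hg' gh'] hc'].
apply: (@mkiso X Z (h' \o h) (g \o g')).
- by move=> x /=; rewrite hg' hg.
- by move=> x /=; rewrite gh gh'.
- by move=> x /=; rewrite hc hc'.
Qed.

Arguments iso_trans {X Y Z}.
Arguments iso_sym {X Y}.

Definition fds_sum (X Y : FDS) : FDS :=
  @mkFDS (fds_carrier X + fds_carrier Y)%type
    (fun s => match s with inl x => inl (fds_map X x) | inr y => inr (fds_map Y y) end).

Definition idFDS (n : nat) : FDS := @mkFDS 'I_n id.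
Definition oneFDS : FDS := @mkFDS unit id.
Definition zeroFDS : FDS := @mkFDS void id.

Lemma iso_prod X X' Y Y' : fds_iso X X' -> fds_iso Y Y' ->
  fds_iso (fds_prod X Y) (fds_prod X' Y').
Proof.
case=> h [[g hg gh] hc]; case=> h' [[g' hg' gh'] hc'].
apply: (@mkiso (fds_prod X Y) (fds_prod X' Y') (fun p => (h p.1, h' p.2))
          (fun p => (g p.1, g' p.2))).
- by case=> x y /=; rewrite hg hg'.
- by case=> x y /=; rewrite gh gh'.
- by case=> x y /=; rewrite hc hc'.
Qed.

Lemma iso_sum X X' Y Y' : fds_iso X X' -> fds_iso Y Y' ->
  fds_iso (fds_sum X Y) (fds_sum X' Y').
Proof.
case=> h [[g hg gh] hc]; case=> h' [[g' hg' gh'] hc'].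
apply: (@mkiso (fds_sum X Y) (fds_sum X' Y')
   (fun s => match s with inl x => inl (h x) | inr y => inr (h' y) end)
   (fun s => match s with inl x => inl (g x) | inr y => inr (g' y) end)).
- by case=> x /=; rewrite ?hg ?hg'.
- by case=> x /=; rewrite ?gh ?gh'.
- by case=> x /=; rewrite ?hc ?hc'.
Qed.

Arguments iso_prod {X X' Y Y'}.
Arguments iso_sum {X X' Y Y'}.

Lemma sum_comm X Y : fds_iso (fds_sum X Y) (fds_sum Y X).
Proof.
apply: (@mkiso (fds_sum X Y) (fds_sum Y X)
   (fun s => match s with inl x => inr x | inr y => inl y end)
   (fun s => match s with inl x => inr x | inr y => inl y end)); by case.
Qed.

Lemma prod_comm X Y : fds_iso (fds_prod X Y) (fds_prod Y X).
Proof.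
apply: (@mkiso (fds_prod X Y) (fds_prod Y X) (fun p => (p.2, p.1))
   (fun p => (p.2, p.1))); by case.
Qed.

Lemma prod_assoc X Y Z :
  fds_iso (fds_prod (fds_prod X Y) Z) (fds_prod X (fds_prod Y Z)).
Proof.
apply: (@mkiso (fds_prod (fds_prod X Y) Z) (fds_prod X (fds_prod Y Z))
   (fun p => (p.1.1, (p.1.2, p.2))) (fun p => ((p.1, p.2.1), p.2.2))).
- by case=> [[]].
- by case=> ? [].
- by case=> [[]].
Qed.

Lemma prod_distr Z U V :
  fds_iso (fds_prod Z (fds_sum U V)) (fds_sum (fds_prod Z U) (fds_prod Z V)).
Proof.
apply: (@mkiso (fds_prod Z (fds_sum U V)) (fds_sum (fds_prod Z U) (fds_prod Z V))
   (fun p => match p.2 with inl u => inl (p.1, u) | inr v => inr (p.1, v) end)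
   (fun s => match s with inl p => (p.1, inl p.2) | inr p => (p.1, inr p.2) end)).
- by case=> z [].
- by case=> [[]|[]].
- by case=> z [].
Qed.

Lemma prod_swap12 Z W X :
  fds_iso (fds_prod Z (fds_prod W X)) (fds_prod W (fds_prod Z X)).
Proof.
apply: (iso_trans (iso_sym (prod_assoc _ _ _))).
apply: iso_trans (prod_assoc _ _ _).
apply: iso_prod (prod_comm _ _) (iso_refl _).
Qed.

Lemma lift_iso Z W X X' : fds_iso (fds_prod Z X) (fds_prod Z X') ->
  fds_iso (fds_prod Z (fds_prod W X)) (fds_prod Z (fds_prod W X')).
Proof.
move=> H; apply: (iso_trans (prod_swap12 _ _ _)).
apply: iso_trans (prod_swap12 _ _ _).
exact: iso_prod (iso_refl _) H.
Qed.

Lemma cycle_sq n :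
  fds_iso (fds_prod (cycleFDS n.+2) (cycleFDS n.+2))
          (fds_prod (idFDS n.+2) (cycleFDS n.+2)).
Proof.
apply: (@mkiso (fds_prod (cycleFDS n.+2) (cycleFDS n.+2))
          (fds_prod (idFDS n.+2) (cycleFDS n.+2))
   (fun p => ((p.2 : 'Z_n.+2) - p.1, p.2)%R)
   (fun p => ((p.2 : 'Z_n.+2) - p.1, p.2)%R)).
- by case=> i j /=; congr (_, _); ring.
- by case=> i j /=; congr (_, _); ring.
- case=> i j /=; rewrite -!(add_Zp_1 (p:=n.+2)); congr (_, _).
  rewrite /=; ring.
Qed.

Lemma Ca_Ca a X : 1 < a ->
  fds_iso (fds_prod (cycleFDS a) (fds_prod (cycleFDS a) X))
          (fds_prod (cycleFDS a) (fds_prod (idFDS a) X)).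
Proof.
case: a => [|[|n]] // _.
apply: (iso_trans (iso_sym (prod_assoc _ _ _))).
apply: (iso_trans (iso_prod (cycle_sq n) (iso_refl X))).
apply: (iso_trans (prod_assoc _ _ _)).
exact: prod_swap12.
Qed.

Arguments Ca_Ca {a} X.

Fixpoint build (A : seq nat) : FDS * FDS :=
  match A with
  | [::] => (oneFDS, zeroFDS)
  | a :: A' =>
      let: (X, X') := build A' in
      (fds_sum (fds_prod (idFDS a) X) (fds_prod (cycleFDS a) X'),
       fds_sum (fds_prod (idFDS a) X') (fds_prod (cycleFDS a) X))
  end.

Lemma bij_prod X Y : is_perm_fds X -> is_perm_fds Y -> is_perm_fds (fds_prod X Y).
Proof.
case=> g hg gh; case=> g' hg' gh'.
exists (fun p => (g p.1, g' p.2)); case=> x y /=; by rewrite ?hg ?hg' ?gh ?gh'.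
Qed.

Lemma bij_sum X Y : is_perm_fds X -> is_perm_fds Y -> is_perm_fds (fds_sum X Y).
Proof.
case=> g hg gh; case=> g' hg' gh'.
exists (fun s => match s with inl x => inl (g x) | inr y => inr (g' y) end);
  case=> x /=; by rewrite ?hg ?hg' ?gh ?gh'.
Qed.

Lemma ordS_neq a (c : 'I_a) : 1 < a -> ordS c != c.
Proof.
move=> a1; apply/eqP=> /(congr1 val) /=.
case: (ltnP c.+1 a) => h.
  by rewrite modn_small // => /eqP; rewrite -[_ == _]/(c.+1 == c) eqn_leq ltnn.
have e : c.+1 = a by apply/eqP; rewrite eqn_leq ltn_ord.
rewrite e modnn => c0; move: e; rewrite -c0 => e; by rewrite -e in a1.
Qed.

Lemma build_spec A : (forall a, a \in A -> 1 < a) ->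
  let: (X, X') := build A in
  [/\ is_perm_fds X, is_perm_fds X', (exists x, fds_map X x = x),
      (forall x, fds_map X' x != x) &
      forall b, b \in A -> fds_iso (fds_prod (cycleFDS b) X) (fds_prod (cycleFDS b) X')].
Proof.
elim: A => [|a A IH] HA /=.
  split.
  - by exists id.
  - by exists id.
  - by exists tt.
  - by case.
  - by [].
have a1 : 1 < a by apply: HA; rewrite inE eqxx.
have := IH (fun b hb => HA b (mem_behead (s:=a::A) hb)).
case: (build A) => X X' [pX pX' [x0 fx0] nX' isoA].
have pI : is_perm_fds (idFDS a) by exists id.
have pC : is_perm_fds (cycleFDS a) by apply: ordS_bij.
split.
- by apply: bij_sum; apply: bij_prod.
- by apply: bij_sum; apply: bij_prod.
- have i0 : 'I_a by exists 0; apply: ltnW.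
  by exists (inl (i0, x0)); rewrite /= fx0.
- case=> [[i y]|[c z]] /=; apply/negP=> /eqP [].
  + by move/eqP; rewrite (negbTE (nX' y)).
  + by move/eqP; rewrite (negbTE (@ordS_neq a c a1)).
- move=> b; rewrite inE => /orP [/eqP -> | hb].
  + apply: (iso_trans (prod_distr _ _ _)).
    apply: (iso_trans (Y:=_)) ; last apply: (iso_sym (prod_distr _ _ _)).
    apply: (iso_trans (sum_comm _ _)).
    apply: iso_sum.
    * exact: Ca_Ca.
    * exact: iso_sym (Ca_Ca _ a1).
  + apply: (iso_trans (prod_distr _ _ _)).
    apply: (iso_trans (Y:=_)) ; last apply: (iso_sym (prod_distr _ _ _)).
    apply: iso_sum; apply: lift_iso.
    * exact: isoA.
    * exact: iso_sym (isoA b hb).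
Qed.

Theorem mainTheorem15 (A : seq nat) :
  (forall a, a \in A -> 1 < a) ->
  exists X X' : FDS,
    [/\ is_perm_fds X, is_perm_fds X', ~ fds_iso X X' &
        forall a, a \in A -> fds_iso (fds_prod (cycleFDS a) X) (fds_prod (cycleFDS a) X')].
Proof.
move=> HA; have := @build_spec A HA.
case: (build A) => X X' [pX pX' [x0 fx0] nX' isoA].
exists X, X'; split=> //.
case=> h [_ hc]; have := nX' (h x0); by rewrite -hc fx0 eqxx.
Qed.
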